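(* Let $(t_j^i)_{0\le j\le i}$ be real numbers and let $h_{j,k}^i$ ($0\le k\le i$, $0\le j\le i-k$) be defined by $h_{j,0}^i=t_j^i$ and $h_{j,k}^i=h_{j,k-1}^{i-1}+h_{j,k-1}^{i}+h_{j+1,k-1}^{i}$ for $k\ge 1$. Suppose there is a constant $c$ with $t_0^i=t_i^i=c$ for all $i\ge 0$, and that $t^i_{j}=t^{i-1}_{j-1}+t^{i-1}_{j}$ for all $i\ge 2$, $1\le j\le i-1$. Then $t_j^i=t_{i-j}^i$ for all $0\le j\le i$, and for fixed $j,k\ge 0$ the sequences $\{h_{j,k}^{i}\}_{i=j+k}^{\infty}$ and $\{h_{i-(j+k),k}^{i}\}_{i=j+k}^{\infty}$ are equal and both satisfy $\sum_{\ell=0}^{j+k+1}(-1)^{\ell}\binom{j+k+1}{\ell} h^{i+\ell}=0$ for all $i\ge j+k$, i.e., they are the same $(j+k+1)$-th order homogeneous linear recurrence sequence. *)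

(* Defs.v *)
From HB Require Import structures.
From mathcomp Require Import all_boot all_order all_algebra.
From mathcomp Require Import reals.
Set Implicit Arguments. Unset Strict Implicit. Unset Printing Implicit Defensive.
Import Order.TTheory GRing.Theory Num.Theory.
Local Open Scope ring_scope.

(* hseq t i j k  =  h^i_{j,k}, where t i j = t^i_j.
   h^i_{j,0} = t^i_j ;  h^i_{j,k} = h^{i-1}_{j,k-1} + h^i_{j,k-1} + h^i_{j+1,k-1}.
   Meaningful only for 0 <= k <= i, 0 <= j <= i - k (values outside are junk
   and never used in the statement). *)
Fixpoint hseq {R : realType} (t : nat -> nat -> R) (i j k : nat) : R :=
  match k with
  | 0 => t i j
  | k'.+1 => hseq t i.-1 j k' + hseq t i j k' + hseq t i j.+1 k'
  end.

(* Main.v *)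
Require Import Defs.
From HB Require Import structures.
From mathcomp Require Import all_boot all_order all_algebra.
From mathcomp Require Import reals.
From mathcomp Require Import zify.
Import Order.TTheory GRing.Theory Num.Theory.
Local Open Scope ring_scope.

Definition Ssum {R : realType} (n : nat) (f : nat -> R) (i : nat) : R :=
  \sum_(l < n.+1) (-1) ^+ l * ('C(n, l))%:R * f (i + l)%N.

Lemma Ssum_rec {R : realType} n (f : nat -> R) i :
  Ssum n.+1 f i = Ssum n f i - Ssum n f i.+1.
Proof.
rewrite /Ssum big_ord_recl [in X in X - _]big_ord_recl /= !bin0 addn0 !expr0 !mul1r.
under eq_bigr => l _ do rewrite /bump /= add1n binS natrD mulrDr mulrDl.
rewrite big_split /= [X in _ + (X + _)]big_ord_recr /= bin_small // mulr0 mul0r addr0.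
rewrite /bump /= addrA; congr (_ + _).
rewrite -sumrN; apply: eq_bigr => l _.
by rewrite exprS mulN1r !mulNr addSn addnS.
Qed.

Lemma eq_Ssum {R : realType} n (f g : nat -> R) i :
  (forall l, (l <= n)%N -> f (i + l)%N = g (i + l)%N) -> Ssum n f i = Ssum n g i.
Proof.
move=> H; rewrite /Ssum; apply: eq_bigr => l _; rewrite H //.
by rewrite -ltnS ltn_ord.
Qed.

Lemma Ssum_add {R : realType} n (f g : nat -> R) i :
  Ssum n (fun x => f x + g x) i = Ssum n f i + Ssum n g i.
Proof.
by rewrite /Ssum -big_split; apply: eq_bigr => l _; rewrite mulrDr.
Qed.

Lemma Ssum_scale {R : realType} n (c : R) (f : nat -> R) i :
  Ssum n (fun x => c * f x) i = c * Ssum n f i.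
Proof.
rewrite /Ssum mulr_sumr; apply: eq_bigr => l _; rewrite !mulrA.
congr (_ * _); by rewrite mulrC mulrA.
Qed.

Lemma Ssum_mono {R : realType} n (f : nat -> R) m :
  (forall i, (m <= i)%N -> Ssum n f i = 0) ->
  forall i, (m <= i)%N -> Ssum n.+1 f i = 0.
Proof.
move=> H i Hi; rewrite Ssum_rec !H ?subr0 //; lia.
Qed.

Lemma Ssum_bin {R : realType} j i :
  Ssum j.+1 (fun x => ('C(x, j))%:R : R) i = 0.
Proof.
elim: j i => [|j IH] i.
  by rewrite Ssum_rec /Ssum !big_ord1 /= !bin0 subrr.
rewrite Ssum_rec.
have -> : Ssum j.+1 (fun x => ('C(x, j.+1))%:R : R) i.+1 =
          Ssum j.+1 (fun x => ('C(x, j.+1))%:R + ('C(x, j))%:R : R) i.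
  by rewrite /Ssum; apply: eq_bigr => l _; rewrite addSn binS natrD.
by rewrite Ssum_add IH addr0 subrr.
Qed.

Section Main.
Variables (R : realType) (t : nat -> nat -> R) (c : R).
Hypothesis hedge0 : forall i : nat, t i 0%N = c.
Hypothesis hedgei : forall i : nat, t i i = c.
Hypothesis hrec : forall i j : nat, (2 <= i)%N -> (1 <= j)%N -> (j <= i.-1)%N ->
            t i j = t i.-1 j.-1 + t i.-1 j.

Lemma tC i j : (j <= i)%N -> t i j = c * ('C(i, j))%:R.
Proof.
elim: i j => [|i IH] j Hj.
  by move: Hj; rewrite leqn0 => /eqP ->; rewrite hedge0 bin0 mulr1.
case: j Hj => [|j] Hj; first by rewrite hedge0 bin0 mulr1.
case: (ltngtP j i) => Hji.
- rewrite hrec /=; try lia.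
  rewrite (IH j) ?(ltnW Hji) // (IH j.+1) // binS natrD mulrDr addrC //.
- lia.
- by rewrite Hji hedgei binn mulr1.
Qed.

Lemma hsym k j i : (j + k <= i)%N -> hseq t i j k = hseq t i (i - (j + k))%N k.
Proof.
elim: k j i => [|k IH] j i Hi.
  rewrite /= !addn0 in Hi *; rewrite !tC ?leq_subr // bin_sub //.
rewrite /=.
have E1 : hseq t i.-1 j k = hseq t i.-1 (i - (j + k.+1))%N k.
  rewrite IH; last by lia. by congr hseq; lia.
have E2 : hseq t i j k = hseq t i (i - (j + k.+1)).+1 k.
  rewrite IH; last by lia. by congr hseq; lia.
have E3 : hseq t i j.+1 k = hseq t i (i - (j + k.+1))%N k.
  rewrite IH; last by lia. by congr hseq; lia.
by rewrite E1 E2 E3 -!addrA [X in _ + X]addrC.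
Qed.

Lemma hrecur k j i : (j + k <= i)%N -> Ssum (j + k).+1 (fun x => hseq t x j k) i = 0.
Proof.
elim: k j i => [|k IH] j i Hi.
  rewrite addn0 in Hi *.
  rewrite (@eq_Ssum R _ _ (fun x => c * ('C(x, j))%:R)).
    by rewrite Ssum_scale Ssum_bin mulr0.
  by move=> l _ /=; rewrite tC //; lia.
rewrite /= addnS.
rewrite (@eq_Ssum R _ _ (fun x => (hseq t x j k + hseq t x.-1 j k) + hseq t x j.+1 k)); last first.
  by move=> l _ /=; rewrite [hseq t _ j k + _]addrC.
rewrite !Ssum_add.
rewrite (@Ssum_mono R _ _ (j + k)%N (IH j)); last by lia.
have -> : Ssum (j + k).+2 (fun x => hseq t x.-1 j k) i =
          Ssum (j + k).+2 (fun x => hseq t x j k) i.-1.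
  by rewrite /Ssum; apply: eq_bigr => l _; congr (_ * hseq _ _ _ _); lia.
rewrite (@Ssum_mono R _ _ (j + k)%N (IH j)); last by lia.
have := IH j.+1 i; rewrite addSn => ->; last by lia.
by rewrite !addr0.
Qed.

End Main.

Theorem corollary8 (R : realType) (t : nat -> nat -> R) (c : R)
  (hedge0 : forall i : nat, t i 0%N = c)
  (hedgei : forall i : nat, t i i = c)
  (hrec : forall i j : nat, (2 <= i)%N -> (1 <= j)%N -> (j <= i.-1)%N ->
            t i j = t i.-1 j.-1 + t i.-1 j) :
  (forall i j : nat, (j <= i)%N -> t i j = t i (i - j)%N) /\
  (forall j k : nat,
     (forall i : nat, (j + k <= i)%N -> hseq t i j k = hseq t i (i - (j + k))%N k) /\
     (forall i : nat, (j + k <= i)%N ->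
        \sum_(l < (j + k).+2) (-1) ^+ l * ('C((j + k).+1, l))%:R * hseq t (i + l)%N j k = 0) /\
     (forall i : nat, (j + k <= i)%N ->
        \sum_(l < (j + k).+2) (-1) ^+ l * ('C((j + k).+1, l))%:R
            * hseq t (i + l)%N (i + l - (j + k))%N k = 0)).
Proof.
split.
  move=> i j Hj; rewrite !(@tC R t c hedge0 hedgei hrec) ?leq_subr // bin_sub //.
move=> j k; split; first exact: @hsym R t c hedge0 hedgei hrec k j.
split.
  by move=> i Hi; have := @hrecur R t c hedge0 hedgei hrec k j i Hi; rewrite /Ssum.
move=> i Hi; transitivity (Ssum (j + k).+1 (fun x => hseq t x j k) i);
  last exact: (@hrecur R t c hedge0 hedgei hrec k j i Hi).
rewrite /Ssum; apply: eq_bigr => l _; rewrite -(@hsym R t c hedge0 hedgei hrec) //; lia.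
Qed.
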